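(* Let $S$ be an abundant semigroup with a quasi-ideal adequate transversal $S^0$, let $R=\{x\in S:e_x=e_{\bar x}\}$, $L=\{x\in S:f_x=f_{\bar x}\}$ and $T=\{(x,a)\in L\times R:\bar x=\bar a\}$, equipped with the multiplication $(x,a)(y,b)=(e_xay,\,ayf_b)$ (products computed in $S$; this multiplication is well defined, i.e. its values lie in $T$). Then $T$ is an abundant semigroup and $T\cong S$.
   Context: For a semigroup $S$, $\mathcal{R}^\ast=\{(a,b): \text{for all } x,y\in S^1,\ xa=ya \iff xb=yb\}$ and $\mathcal{L}^\ast$ dually. $S$ is abundant if every $\mathcal{R}^\ast$-class and $\mathcal{L}^\ast$-class contains an idempotent; adequate if abundant with commuting idempotents. In an adequate semigroup $a^+,a^\ast$ are the unique idempotents $\mathcal{R}^\ast$-, resp. $\mathcal{L}^\ast$-related to $a$. A subsemigroup $U$ of abundant $S$ is a $\ast$-subsemigroup if $U$ is abundant and $\mathcal{L}^\ast_U=\mathcal{L}^\ast_S\cap(U\times U)$, $\mathcal{R}^\ast_U=\mathcal{R}^\ast_S\cap(U\times U)$. An adequate $\ast$-subsemigroup $S^0$ of abundant $S$ is an adequate transversal if for each $x\in S$ there is a unique $\bar x\in S^0$ and idempotents $e,f$ of $S$ with $x=e\bar xf$, $e\,\mathcal{L}\,\bar x^+$, $f\,\mathcal{R}\,\bar x^\ast$; these $e,f$ are unique and denoted $e_x,f_x$. It is a quasi-ideal adequate transversal if moreover $S^0SS^0\subseteq S^0$. *)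

(* Defs.v *)
Section SG.
Context {A : Type} (m : A -> A -> A).

(* left / right multiplication by an element of A^1 (None = adjoined identity) *)
Definition mul1l (u : option A) (a : A) : A :=
  match u with None => a | Some x => m x a end.
Definition mul1r (a : A) (u : option A) : A :=
  match u with None => a | Some x => m a x end.
Definition in1 (P : A -> Prop) (u : option A) : Prop :=
  match u with None => True | Some x => P x end.

Definition fullset : A -> Prop := fun _ => True.

Definition RstarP (P : A -> Prop) (a b : A) : Prop :=
  forall u v, in1 P u -> in1 P v ->
    (mul1l u a = mul1l v a <-> mul1l u b = mul1l v b).
Definition LstarP (P : A -> Prop) (a b : A) : Prop :=
  forall u v, in1 P u -> in1 P v ->
    (mul1r a u = mul1r a v <-> mul1r b u = mul1r b v).

Definition idem (e : A) : Prop := m e e = e.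

Definition closed (P : A -> Prop) : Prop :=
  forall a b, P a -> P b -> P (m a b).
Definition assoc_on (P : A -> Prop) : Prop :=
  forall a b c, P a -> P b -> P c -> m (m a b) c = m a (m b c).

Definition abundant_in (P : A -> Prop) : Prop :=
  (forall a, P a -> exists e, P e /\ idem e /\ RstarP P a e) /\
  (forall a, P a -> exists e, P e /\ idem e /\ LstarP P a e).
Definition abundant : Prop := abundant_in fullset.

Definition star_sub (P : A -> Prop) : Prop :=
  closed P /\ abundant_in P /\
  (forall a b, P a -> P b -> (RstarP P a b <-> RstarP fullset a b)) /\
  (forall a b, P a -> P b -> (LstarP P a b <-> LstarP fullset a b)).

Definition adequate_star_sub (P : A -> Prop) : Prop :=
  star_sub P /\
  (forall e f, P e -> P f -> idem e -> idem f -> m e f = m f e).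

Definition GreenL (a b : A) : Prop :=
  exists u v, a = mul1l u b /\ b = mul1l v a.
Definition GreenR (a b : A) : Prop :=
  exists u v, a = mul1r b u /\ b = mul1r a v.

Definition is_plus (P : A -> Prop) (a e : A) : Prop :=
  P e /\ idem e /\ RstarP P a e.
Definition is_star (P : A -> Prop) (a f : A) : Prop :=
  P f /\ idem f /\ LstarP P a f.

Definition transversal_data (P : A -> Prop) (x xb e f : A) : Prop :=
  P xb /\ idem e /\ idem f /\ x = m (m e xb) f /\
  (exists p, is_plus P xb p /\ GreenL e p) /\
  (exists q, is_star P xb q /\ GreenR f q).

Definition adequate_transversal (P : A -> Prop) : Prop :=
  adequate_star_sub P /\
  forall x, exists! xb, exists e f, transversal_data P x xb e f.

Definition qi_adequate_transversal (P : A -> Prop) : Prop :=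
  adequate_transversal P /\
  forall a s b, P a -> P b -> P (m (m a s) b).

End SG.

(* Main.v *)
Require Import Defs.
From Stdlib Require Import Setoid.

Lemma in1_full {A} (u : option A) : in1 fullset u.
Proof. destruct u; exact I. Qed.

Lemma transfer (A T : Type) (mS : A->A->A) (mT : T->T->T) (inT : T -> Prop) (phi : A -> T)
 (Has: forall a b c, mS (mS a b) c = mS a (mS b c)) (Hab: abundant mS)
 (Hin: forall s, inT (phi s)) (Hsur: forall p, inT p -> exists s, phi s = p)
 (Hinj: forall s t, phi s = phi t -> s = t) (Hm: forall s t, phi (mS s t) = mT (phi s) (phi t)) :
 closed mT inT /\ assoc_on mT inT /\ abundant_in mT inT.
Proof.
  assert (Hiff: forall a b, phi a = phi b <-> a = b)
    by (split; [apply Hinj| intros ->; reflexivity]).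
  assert (Hopt: forall u, in1 inT u -> exists u', forall x,
     mul1l mT u (phi x) = phi (mul1l mS u' x) /\ mul1r mT (phi x) u = phi (mul1r mS x u')).
  { intros [u|] Hu.
    - simpl in Hu. destruct (Hsur u Hu) as [u' <-]. exists (Some u'). intro; simpl; rewrite !Hm; split; reflexivity.
    - exists None; simpl; split; reflexivity. }
  split; [|split; [|split]].
  - intros a b Ha Hb. destruct (Hsur a Ha) as [s <-]. destruct (Hsur b Hb) as [t <-].
    rewrite <- Hm; apply Hin.
  - intros a b c Ha Hb Hc. destruct (Hsur a Ha) as [s <-]. destruct (Hsur b Hb) as [t <-].
    destruct (Hsur c Hc) as [r <-]. rewrite <- !Hm, Has; reflexivity.
  - intros a Ha. destruct (Hsur a Ha) as [s <-]. destruct (proj1 Hab s I) as [e [_ [He HR]]].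
    exists (phi e). split; [apply Hin|split].
    + unfold idem. rewrite <- Hm, He; reflexivity.
    + intros u v Hu Hv. destruct (Hopt u Hu) as [u' Hu']; destruct (Hopt v Hv) as [v' Hv'].
      rewrite !(proj1 (Hu' _)), !(proj1 (Hv' _)), !Hiff. apply HR; apply in1_full.
  - intros a Ha. destruct (Hsur a Ha) as [s <-]. destruct (proj2 Hab s I) as [e [_ [He HR]]].
    exists (phi e). split; [apply Hin|split].
    + unfold idem. rewrite <- Hm, He; reflexivity.
    + intros u v Hu Hv. destruct (Hopt u Hu) as [u' Hu']; destruct (Hopt v Hv) as [v' Hv'].
      rewrite !(proj2 (Hu' _)), !(proj2 (Hv' _)), !Hiff. apply HR; apply in1_full.
Qed.

Lemma GL_props {S} (mul : S -> S -> S)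
  (Hassoc : forall a b c, mul (mul a b) c = mul a (mul b c)) e p :
  idem mul e -> idem mul p -> GreenL mul e p -> mul e p = e /\ mul p e = p.
Proof.
  intros He Hp [u [v [H1 H2]]]. split.
  - destruct u as [u|]; simpl in H1; rewrite H1; [rewrite Hassoc, Hp | apply Hp]; reflexivity.
  - destruct v as [v|]; simpl in H2.
    + rewrite H2 at 1. rewrite Hassoc, He. symmetry; exact H2.
    + subst p; exact He.
Qed.

Lemma GR_props {S} (mul : S -> S -> S)
  (Hassoc : forall a b c, mul (mul a b) c = mul a (mul b c)) f q :
  idem mul f -> idem mul q -> GreenR mul f q -> mul q f = f /\ mul f q = q.
Proof.
  intros He Hp [u [v [H1 H2]]]. split.
  - destruct u as [u|]; simpl in H1; rewrite H1; [rewrite <- Hassoc, Hp | apply Hp]; reflexivity.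
  - destruct v as [v|]; simpl in H2.
    + rewrite H2 at 1. rewrite <- Hassoc, He. symmetry; exact H2.
    + subst q; exact He.
Qed.

Lemma plus_fix {S} (mul : S -> S -> S) S0 w p : is_plus mul S0 w p -> mul p w = w.
Proof. intros [HSp [Hip HR]]. apply (HR (Some p) None HSp I). exact Hip. Qed.
Lemma star_fix {S} (mul : S -> S -> S) S0 w p : is_star mul S0 w p -> mul w p = w.
Proof. intros [HSp [Hip HR]]. apply (HR (Some p) None HSp I). exact Hip. Qed.
Lemma plus_absorb {S} (mul : S -> S -> S) S0 w p u :
  is_plus mul S0 w p -> S0 u -> mul u w = w -> mul u p = p.
Proof. intros [HSp [Hip HR]] Hu H. apply (HR (Some u) None Hu I). exact H. Qed.
Lemma star_absorb {S} (mul : S -> S -> S) S0 w p u :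
  is_star mul S0 w p -> S0 u -> mul w u = w -> mul p u = p.
Proof. intros [HSp [Hip HR]] Hu H. apply (HR (Some u) None Hu I). exact H. Qed.

Lemma plus_uniq {S} (mul : S -> S -> S) S0
  (Hcomm : forall e f, S0 e -> S0 f -> idem mul e -> idem mul f -> mul e f = mul f e)
  w p p' : is_plus mul S0 w p -> is_plus mul S0 w p' -> p = p'.
Proof.
  intros Hp Hp'. pose proof (plus_fix _ _ _ _ Hp) as F. pose proof (plus_fix _ _ _ _ Hp') as F'.
  pose proof (plus_absorb _ _ _ _ _ Hp (proj1 Hp') F') as A1.
  pose proof (plus_absorb _ _ _ _ _ Hp' (proj1 Hp) F) as A2.
  transitivity (mul p' p); [symmetry; exact A1|].
  rewrite Hcomm; [exact A2|apply Hp'|apply Hp|apply Hp'|apply Hp].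
Qed.

Lemma star_uniq {S} (mul : S -> S -> S) S0
  (Hcomm : forall e f, S0 e -> S0 f -> idem mul e -> idem mul f -> mul e f = mul f e)
  w p p' : is_star mul S0 w p -> is_star mul S0 w p' -> p = p'.
Proof.
  intros Hp Hp'. pose proof (star_fix _ _ _ _ Hp) as F. pose proof (star_fix _ _ _ _ Hp') as F'.
  pose proof (star_absorb _ _ _ _ _ Hp (proj1 Hp') F') as A1.
  pose proof (star_absorb _ _ _ _ _ Hp' (proj1 Hp) F) as A2.
  transitivity (mul p p'); [symmetry; exact A1|].
  rewrite Hcomm; [exact A2|apply Hp|apply Hp'|apply Hp|apply Hp'].
Qed.

Lemma ex_uniq {S} (mul : S -> S -> S)
  (Hassoc : forall a b c, mul (mul a b) c = mul a (mul b c)) S0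
  (Hcomm : forall e f, S0 e -> S0 f -> idem mul e -> idem mul f -> mul e f = mul f e)
  (HRfull : forall a b, S0 a -> S0 b -> RstarP mul S0 a b -> RstarP mul fullset a b)
  x xb e f e' f' :
  transversal_data mul S0 x xb e f -> transversal_data mul S0 x xb e' f' -> e = e'.
Proof.
  intros [Hxb [He [Hf [Hx [[p [Pp GLp]] [q [Pq GRq]]]]]]]
         [_ [He' [Hf' [Hx' [[p' [Pp' GLp']] _]]]]].
  assert (p' = p) by (apply (plus_uniq _ _ Hcomm xb); assumption). subst p'.
  destruct (GL_props _ Hassoc _ _ He (proj1 (proj2 Pp)) GLp) as [Hep Hpe].
  destruct (GL_props _ Hassoc _ _ He' (proj1 (proj2 Pp)) GLp') as [Hep' Hpe'].
  destruct (GR_props _ Hassoc _ _ Hf (proj1 (proj2 Pq)) GRq) as [Hqf Hfq].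
  pose proof (star_fix _ _ _ _ Pq) as Hxq.
  assert (E1 : mul e' x = x).
  { rewrite Hx' at 2. rewrite Hx'. rewrite !Hassoc. rewrite <- (Hassoc e' e'), He'. reflexivity. }
  rewrite Hx in E1. apply (f_equal (fun z => mul z q)) in E1. rewrite !Hassoc in E1.
  rewrite Hfq, Hxq in E1. rewrite <- Hassoc in E1.
  pose proof (proj1 (HRfull xb p Hxb (proj1 Pp) (proj2 (proj2 Pp)) (Some (mul e' e)) (Some e) I I) E1) as E2.
  simpl in E2. rewrite Hassoc, Hep in E2.
  rewrite <- E2. rewrite <- Hep' at 1. rewrite Hassoc, Hpe, Hep'. reflexivity.
Qed.

Lemma fx_uniq {S} (mul : S -> S -> S)
  (Hassoc : forall a b c, mul (mul a b) c = mul a (mul b c)) S0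
  (Hcomm : forall e f, S0 e -> S0 f -> idem mul e -> idem mul f -> mul e f = mul f e)
  (HLfull : forall a b, S0 a -> S0 b -> LstarP mul S0 a b -> LstarP mul fullset a b)
  x xb e f e' f' :
  transversal_data mul S0 x xb e f -> transversal_data mul S0 x xb e' f' -> f = f'.
Proof.
  intros [Hxb [He [Hf [Hx [[p [Pp GLp]] [q [Pq GRq]]]]]]]
         [_ [He' [Hf' [Hx' [_ [q' [Pq' GRq']]]]]]].
  assert (q' = q) by (apply (star_uniq _ _ Hcomm xb); assumption). subst q'.
  destruct (GL_props _ Hassoc _ _ He (proj1 (proj2 Pp)) GLp) as [Hep Hpe].
  destruct (GR_props _ Hassoc _ _ Hf (proj1 (proj2 Pq)) GRq) as [Hqf Hfq].
  destruct (GR_props _ Hassoc _ _ Hf' (proj1 (proj2 Pq)) GRq') as [Hqf' Hfq'].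
  pose proof (plus_fix _ _ _ _ Pp) as Hpx.
  assert (E1 : mul x f' = x).
  { rewrite Hx' at 2. rewrite Hx'. rewrite !Hassoc, Hf'. reflexivity. }
  rewrite Hx in E1. apply (f_equal (fun z => mul p z)) in E1. rewrite <- !Hassoc in E1.
  rewrite Hpe, Hpx in E1. rewrite Hassoc in E1.
  pose proof (proj1 (HLfull xb q Hxb (proj1 Pq) (proj2 (proj2 Pq)) (Some (mul f f')) (Some f) I I) E1) as E2.
  simpl in E2. rewrite <- Hassoc, Hqf in E2.
  rewrite <- E2. rewrite <- Hqf' at 1. rewrite <- Hassoc, Hfq, Hqf'. reflexivity.
Qed.

Theorem lemma2p5 (S : Type) (mul : S -> S -> S)
  (Hassoc : forall a b c, mul (mul a b) c = mul a (mul b c))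
  (Habund : abundant mul)
  (S0 : S -> Prop) (HS0 : qi_adequate_transversal mul S0)
  (bar ex fx : S -> S)
  (Hbar : forall x, transversal_data mul S0 x (bar x) (ex x) (fx x)) :
  let Rset := fun x => ex x = ex (bar x) in
  let Lset := fun x => fx x = fx (bar x) in
  let inT := fun p : S * S => Lset (fst p) /\ Rset (snd p) /\ bar (fst p) = bar (snd p) in
  let mulT := fun p q : S * S =>
    (mul (mul (ex (fst p)) (snd p)) (fst q), mul (mul (snd p) (fst q)) (fx (snd q))) in
  closed mulT inT /\ assoc_on mulT inT /\ abundant_in mulT inT /\
  exists phi : S -> S * S,
    (forall s, inT (phi s)) /\
    (forall p, inT p -> exists! s, phi s = p) /\
    (forall s t, phi (mul s t) = mulT (phi s) (phi t)).
Proof.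
  intros Rset Lset inT mulT.
  destruct HS0 as [[[Hadq Hcomm] Hex] Hqi].
  destruct Hadq as [Hcl [[HabP HabL] [HReq HLeq]]].
  assert (HRfull : forall a b, S0 a -> S0 b -> RstarP mul S0 a b -> RstarP mul fullset a b)
    by (intros a b Ha Hb; apply (HReq a b Ha Hb)).
  assert (HLfull : forall a b, S0 a -> S0 b -> LstarP mul S0 a b -> LstarP mul fullset a b)
    by (intros a b Ha Hb; apply (HLeq a b Ha Hb)).
  assert (Htd : forall x xb e f, transversal_data mul S0 x xb e f ->
                 xb = bar x /\ e = ex x /\ f = fx x).
  { intros x xb e f H.
    assert (xb = bar x).
    { destruct (Hex x) as [x0 [_ Hu]].
      rewrite <- (Hu xb (ex_intro _ e (ex_intro _ f H))).
      apply Hu. exists (ex x), (fx x). apply Hbar. }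
    subst xb. split; [reflexivity|split].
    - exact (ex_uniq _ Hassoc _ Hcomm HRfull _ _ _ _ _ _ H (Hbar x)).
    - exact (fx_uniq _ Hassoc _ Hcomm HLfull _ _ _ _ _ _ H (Hbar x)). }
  assert (GLrefl : forall p, GreenL mul p p) by (intro p; exists None, None; split; reflexivity).
  assert (GRrefl : forall p, GreenR mul p p) by (intro p; exists None, None; split; reflexivity).
  assert (Hself : forall s, ex (bar s) = ex (bar s) /\
     mul (ex (bar s)) (bar s) = bar s /\ mul (bar s) (fx (bar s)) = bar s).
  { intro s. destruct (Hbar s) as [Hxb [He [Hf [Hs [[p [Pp GLp]] [q [Pq GRq]]]]]]].
    assert (T : transversal_data mul S0 (bar s) (bar s) p q).
    { split; [exact Hxb|split; [apply Pp|split; [apply Pq|split]]].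
      - rewrite (plus_fix _ _ _ _ Pp), (star_fix _ _ _ _ Pq); reflexivity.
      - split; [exists p; split; [exact Pp|apply GLrefl]|exists q; split; [exact Pq|apply GRrefl]]. }
    destruct (Htd _ _ _ _ T) as [_ [<- <-]].
    split; [reflexivity|split]; [apply (plus_fix _ _ _ _ Pp)|apply (star_fix _ _ _ _ Pq)]. }
  assert (Hpc1 : forall s, bar (mul (ex s) (bar s)) = bar s /\ ex (mul (ex s) (bar s)) = ex s
                    /\ fx (mul (ex s) (bar s)) = fx (bar s)).
  { intro s. pose proof (Hbar s) as Hd.
    destruct (Hbar s) as [Hxb [He [Hf [Hs [[p [Pp GLp]] [q [Pq GRq]]]]]]].
    assert (T : transversal_data mul S0 (mul (ex s) (bar s)) (bar s) (ex s) (fx (bar s))).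
    { destruct (Hbar (bar s)) as [_ [_ [Hf2 _]]].
      split; [exact Hxb|split; [exact He|split; [exact Hf2|split]]].
      - rewrite Hassoc, (proj2 (proj2 (Hself s))); reflexivity.
      - split; [exists p; split; [exact Pp|exact GLp]|].
        exists q; split; [exact Pq|].
        assert (T2 : transversal_data mul S0 (bar s) (bar s) p q).
        { split; [exact Hxb|split; [apply Pp|split; [apply Pq|split]]].
          - rewrite (plus_fix _ _ _ _ Pp), (star_fix _ _ _ _ Pq); reflexivity.
          - split; [exists p; split; [exact Pp|apply GLrefl]|exists q; split; [exact Pq|apply GRrefl]]. }
        destruct (Htd _ _ _ _ T2) as [_ [_ <-]]. apply GRrefl. }
    destruct (Htd _ _ _ _ T) as [<- [<- <-]]. auto. }
  assert (Hpc2 : forall s, bar (mul (bar s) (fx s)) = bar s /\ ex (mul (bar s) (fx s)) = ex (bar s)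
                    /\ fx (mul (bar s) (fx s)) = fx s).
  { intro s.
    destruct (Hbar s) as [Hxb [He [Hf [Hs [[p [Pp GLp]] [q [Pq GRq]]]]]]].
    assert (T : transversal_data mul S0 (mul (bar s) (fx s)) (bar s) (ex (bar s)) (fx s)).
    { destruct (Hbar (bar s)) as [_ [He2 _]].
      split; [exact Hxb|split; [exact He2|split; [exact Hf|split]]].
      - rewrite (proj1 (proj2 (Hself s))); reflexivity.
      - split; [|exists q; split; [exact Pq|exact GRq]].
        exists p; split; [exact Pp|].
        assert (T2 : transversal_data mul S0 (bar s) (bar s) p q).
        { split; [exact Hxb|split; [apply Pp|split; [apply Pq|split]]].
          - rewrite (plus_fix _ _ _ _ Pp), (star_fix _ _ _ _ Pq); reflexivity.
          - split; [exists p; split; [exact Pp|apply GLrefl]|exists q; split; [exact Pq|apply GRrefl]]. }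
        destruct (Htd _ _ _ _ T2) as [_ [<- _]]. apply GLrefl. }
    destruct (Htd _ _ _ _ T) as [<- [<- <-]]. auto. }
  set (phi := fun s => (mul (ex s) (bar s), mul (bar s) (fx s))).
  assert (Hmul : forall s t, exists p q w,
     mul p w = w /\ mul w q = w /\ bar (mul s t) = w /\
     ex (mul s t) = mul (ex s) p /\ fx (mul s t) = mul q (fx t) /\
     w = mul (mul (bar s) (mul (fx s) (ex t))) (bar t)).
  { intros s t.
    destruct (Hbar s) as [Hxb [He [Hf [Hs [[p0 [Pp0 GLp0]] [q0s [Pq0s GRq0s]]]]]]].
    destruct (Hbar t) as [Hxbt [Het [Hft [Ht [[p0t [Pp0t GLp0t]] [q0 [Pq0 GRq0]]]]]]].
    set (w := mul (mul (bar s) (mul (fx s) (ex t))) (bar t)).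
    assert (Sw : S0 w) by (apply Hqi; assumption).
    destruct (HabP w Sw) as [p [Sp [Ip Rp]]].
    destruct (HabL w Sw) as [q [Sq [Iq Lq]]].
    assert (Pp : is_plus mul S0 w p) by (split; [exact Sp|split; assumption]).
    assert (Pq : is_star mul S0 w q) by (split; [exact Sq|split; assumption]).
    pose proof (plus_fix _ _ _ _ Pp) as Hpw.
    pose proof (star_fix _ _ _ _ Pq) as Hwq.
    destruct (GL_props _ Hassoc _ _ He (proj1 (proj2 Pp0)) GLp0) as [Hep0 Hp0e].
    destruct (GR_props _ Hassoc _ _ Hft (proj1 (proj2 Pq0)) GRq0) as [Hq0f Hfq0].
    assert (Hp0w : mul p0 w = w).
    { unfold w. rewrite !Hassoc. rewrite <- (Hassoc p0 (bar s)), (plus_fix _ _ _ _ Pp0). reflexivity. }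
    assert (Hwq0 : mul w q0 = w).
    { unfold w. rewrite Hassoc, (star_fix _ _ _ _ Pq0). reflexivity. }
    pose proof (plus_absorb _ _ _ _ _ Pp (proj1 Pp0) Hp0w) as Hp0p.
    pose proof (star_absorb _ _ _ _ _ Pq (proj1 Pq0) Hwq0) as Hqq0.
    assert (Hpp0 : mul p p0 = p)
      by (rewrite Hcomm; [exact Hp0p|exact Sp|apply Pp0|exact Ip|apply Pp0]).
    assert (Hq0q : mul q0 q = q)
      by (rewrite Hcomm; [exact Hqq0|apply Pq0|exact Sq|apply Pq0|exact Iq]).
    assert (Hpe : mul p (ex s) = p)
      by (rewrite <- Hpp0 at 1; rewrite Hassoc, Hp0e; exact Hpp0).
    assert (Hfq : mul (fx t) q = q)
      by (rewrite <- Hq0q at 1; rewrite <- Hassoc, Hfq0; exact Hq0q).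
    assert (T : transversal_data mul S0 (mul s t) w (mul (ex s) p) (mul q (fx t))).
    { split; [exact Sw|split; [|split; [|split]]].
      - unfold idem. rewrite !Hassoc. rewrite <- (Hassoc p (ex s)), Hpe, Ip. reflexivity.
      - unfold idem. rewrite !Hassoc. rewrite <- (Hassoc (fx t) q), Hfq, <- Hassoc, Iq. reflexivity.
      - rewrite (Hassoc (ex s) p w), Hpw, <- Hassoc, (Hassoc (ex s) w q), Hwq.
        rewrite Hs at 1. rewrite Ht at 1. unfold w. rewrite !Hassoc. reflexivity.
      - split.
        + exists p; split; [exact Pp|]. exists (Some (ex s)), (Some p); simpl; split; [reflexivity|].
          rewrite <- Hassoc, Hpe, Ip; reflexivity.
        + exists q; split; [exact Pq|]. exists (Some (fx t)), (Some q); simpl; split; [reflexivity|].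
          rewrite Hassoc, Hfq, Iq; reflexivity. }
    destruct (Htd _ _ _ _ T) as [<- [<- <-]].
    exists p, q, w. repeat split; assumption. }
  assert (Hm : forall s t, phi (mul s t) = mulT (phi s) (phi t)).
  { intros s t. destruct (Hmul s t) as [p [q [w [Hpw [Hwq [Hb [He [Hf Hw]]]]]]]].
    unfold phi, mulT; simpl. rewrite Hb, He, Hf.
    rewrite (proj1 (proj2 (Hpc1 s))), (proj2 (proj2 (Hpc2 t))).
    rewrite (Hassoc (ex s) p), Hpw, <- (Hassoc w q), Hwq, Hw. f_equal; rewrite !Hassoc; reflexivity. }
  assert (Hin : forall s, inT (phi s)).
  { intro s. unfold inT, Lset, Rset, phi; simpl.
    rewrite (proj1 (Hpc1 s)), (proj1 (Hpc2 s)).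
    split; [apply Hpc1|split; [apply Hpc2|reflexivity]]. }
  assert (Hinj : forall s t, phi s = phi t -> s = t).
  { intros s t H. unfold phi in H. injection H as H1 H2.
    assert (Eb : bar s = bar t).
    { rewrite <- (proj1 (Hpc1 s)), <- (proj1 (Hpc1 t)), H1; reflexivity. }
    assert (Ee : ex s = ex t).
    { rewrite <- (proj1 (proj2 (Hpc1 s))), <- (proj1 (proj2 (Hpc1 t))), H1; reflexivity. }
    assert (Ef : fx s = fx t).
    { rewrite <- (proj2 (proj2 (Hpc2 s))), <- (proj2 (proj2 (Hpc2 t))), H2; reflexivity. }
    destruct (Hbar s) as [_ [_ [_ [Hs _]]]]. destruct (Hbar t) as [_ [_ [_ [Ht _]]]].
    rewrite Hs, Ht, Eb, Ee, Ef. reflexivity. }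
  assert (Hsur : forall pr, inT pr -> exists s, phi s = pr).
  { intros [x a] [HL [HR Hba]]. unfold Lset, Rset in *; simpl in *.
    destruct (Hbar x) as [Hxb [He [Hf [Hx [[p [Pp GLp]] Hqx]]]]].
    destruct (Hbar a) as [Hab [Hea [Hfa [Ha [Hpa [q [Pq GRq]]]]]]].
    rewrite <- Hba in Pq.
    assert (T : transversal_data mul S0 (mul (mul (ex x) (bar x)) (fx a)) (bar x) (ex x) (fx a)).
    { split; [exact Hxb|split; [exact He|split; [exact Hfa|split; [reflexivity|split]]]].
      - exists p; split; assumption.
      - exists q; split; assumption. }
    exists (mul (mul (ex x) (bar x)) (fx a)). unfold phi.
    destruct (Htd _ _ _ _ T) as [<- [<- <-]].
    f_equal.
    - rewrite Hx at 3. rewrite HL, Hassoc, (proj2 (proj2 (Hself x))). reflexivity.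
    - rewrite Ha at 2. rewrite HR, <- Hba, (proj1 (proj2 (Hself x))). reflexivity. }
  destruct (transfer _ _ mul mulT inT phi Hassoc Habund Hin Hsur Hinj Hm) as [C1 [C2 C3]].
  split; [exact C1|split; [exact C2|split; [exact C3|]]].
  exists phi. split; [exact Hin|split; [|exact Hm]].
  intros pr Hp. destruct (Hsur pr Hp) as [s Hs]. exists s. split; [exact Hs|].
  intros t Ht. apply Hinj. rewrite Hs, Ht. reflexivity.
Qed.
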